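(* Let $n\ge1$. (1) If $\mathrm{non}(\mathcal{N})>\mathrm{non}(\mathcal{M})$, then there exists a linear subspace of $\mathbb{R}^n$, considered as a vector space over $\mathbb{Q}$, which belongs to $\mathcal{N}\setminus\mathcal{M}$. (2) If $\mathrm{non}(\mathcal{M})>\mathrm{non}(\mathcal{N})$, then there exists a linear subspace of $\mathbb{R}^n$ over $\mathbb{Q}$ which belongs to $\mathcal{M}\setminus\mathcal{N}$.
   Context: $\mathcal{N}$ is the $\sigma$-ideal of Lebesgue null subsets of $\mathbb{R}^n$, and $\mathcal{M}$ is the $\sigma$-ideal of meager subsets of $\mathbb{R}^n$. For an ideal $\mathcal{I}$, $\mathrm{non}(\mathcal{I})=\min\{|A|:A\subseteq\mathbb{R}^n,\ A\notin\mathcal{I}\}$. *)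

(* Defs.v *)
From mathcomp Require Import ssreflect ssrbool ssrnat eqtype seq fintype.
From Stdlib Require Import Reals QArith.
Open Scope R_scope.

Definition Vec (n : nat) := 'I_n -> R.
Definition vset (n : nat) := Vec n -> Prop.

Definition box_vol {n : nat} (a b : Vec n) : R :=
  foldr Rmult 1 (map (fun i => b i - a i) (enum 'I_n)).

Definition in_box {n : nat} (a b : Vec n) (x : Vec n) : Prop :=
  forall i, a i <= x i <= b i.

Definition null_set {n : nat} (A : vset n) : Prop :=
  forall eps : R, 0 < eps ->
    exists a b : nat -> Vec n,
      (forall k i, a k i <= b k i) /\
      (forall x, A x -> exists k, in_box (a k) (b k) x) /\
      (forall N : nat, sum_f_R0 (fun k => box_vol (a k) (b k)) N <= eps).

Definition ball {n : nat} (x : Vec n) (r : R) (y : Vec n) : Prop :=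
  forall i, Rabs (y i - x i) < r.

Definition closure {n : nat} (A : vset n) : vset n :=
  fun x => forall r, 0 < r -> exists y, A y /\ ball x r y.

Definition interior {n : nat} (A : vset n) : vset n :=
  fun x => exists r, 0 < r /\ forall y, ball x r y -> A y.

Definition nowhere_dense {n : nat} (A : vset n) : Prop :=
  forall x, ~ interior (closure A) x.

Definition meager {n : nat} (A : vset n) : Prop :=
  exists F : nat -> vset n,
    (forall k, nowhere_dense (F k)) /\ (forall x, A x -> exists k, F k x).

Definition card_le {n : nat} (A B : vset n) : Prop :=
  exists f : Vec n -> Vec n,
    (forall x, A x -> B (f x)) /\
    (forall x y, A x -> A y -> f x = f y -> x = y).

Definition card_lt {n : nat} (A B : vset n) : Prop :=
  card_le A B /\ ~ card_le B A.

(* non(I) < non(J), for ideals given as predicates on subsets: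
   some set not in I has cardinality strictly below every set not in J.
   (This is exactly min{|A| : A notin I} < min{|B| : B notin J}.) *)
Definition non_lt {n : nat} (I J : vset n -> Prop) : Prop :=
  exists A : vset n, ~ I A /\ forall B : vset n, ~ J B -> card_lt A B.

Definition vzero (n : nat) : Vec n := fun _ => 0.
Definition vadd {n : nat} (x y : Vec n) : Vec n := fun i => x i + y i.
Definition vscale {n : nat} (c : R) (x : Vec n) : Vec n := fun i => c * x i.

Definition Q_subspace {n : nat} (V : vset n) : Prop :=
  V (vzero n) /\
  (forall x y, V x -> V y -> V (vadd x y)) /\
  (forall (q : Q) x, V x -> V (vscale (Q2R q) x)).

(* Main.v *)
Require Import Defs.
From mathcomp Require Import ssreflect ssrbool ssrnat eqtype seq fintype.
From Stdlib Require Import Reals QArith.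
Open Scope R_scope.
From Stdlib Require Import Classical ClassicalEpsilon FunctionalExtensionality PropExtensionality Cantor Lra Lia Qreals.
From mathcomp Require classical_sets.
Module ZornM.
Import classical_sets.
Local Open Scope classical_set_scope.
Lemma my_zorn (T:Type) (P : (T->Prop)->Prop) :
  (forall F : (T->Prop)->Prop, (forall G, F G -> P G) ->
     (forall G1 G2, F G1 -> F G2 -> (forall t, G1 t -> G2 t) \/ (forall t, G2 t -> G1 t)) ->
     P (fun t => exists G, F G /\ G t)) ->
  exists G, P G /\ forall G', (forall t, G t -> G' t) -> (exists t, G' t /\ ~ G t) -> ~ P G'.
Proof.
move=> H.
have [|G [PG HG]] := @Zorn_bigcup T P.
  move=> F FP tot.
  have -> : (\bigcup_(X in F) X) = (fun t => exists G, F G /\ G t).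
    apply: functional_extensionality => t; apply: boolp.propext; split.
    - by case=> X FX Xt; exists X.
    - by case=> X [FX Xt]; exists X.
  apply: H; first by [].
  move=> G1 G2 F1 F2.
  case: (tot G1 G2 F1 F2) => s; [left|right]; exact: s.
exists G; split=> // Gp s [t [G't nGt]]; apply: (HG Gp); split; first exact: s.
by move=> /(_ t G't).
Qed.
End ZornM.



Lemma compar {U : Type} (u0 : U) (X Z : U -> Prop) :
 (exists h : U -> U, (forall x, X x -> Z (h x)) /\
    (forall x y, X x -> X y -> h x = h y -> x = y)) \/
 (exists h : U -> U, (forall z, Z z -> X (h z)) /\
    (forall x y, Z x -> Z y -> h x = h y -> x = y)).
Proof.
pose P := fun G : U*U -> Prop => (forall x z, G (x,z) -> X x /\ Z z) /\
  (forall x z z', G (x,z) -> G (x,z') -> z = z') /\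
  (forall x x' z, G (x,z) -> G (x',z) -> x = x').
have [G [[HG1 [HG2 HG3]] Gmax]] : exists G, P G /\ forall G', (forall t, G t -> G' t) -> (exists t, G' t /\ ~ G t) -> ~ P G'.
  apply: ZornM.my_zorn => F FP tot.
  split; [|split].
  - move=> x z [G [FG Gt]]. exact: (proj1 (FP G FG) _ _ Gt).
  - move=> x z z' [G1 [F1 H1]] [G2 [F2 H2]].
    case: (tot G1 G2 F1 F2) => s.
    + exact: (proj1 (proj2 (FP G2 F2)) _ _ _ (s _ H1) H2).
    + exact: (proj1 (proj2 (FP G1 F1)) _ _ _ H1 (s _ H2)).
  - move=> x x' z [G1 [F1 H1]] [G2 [F2 H2]].
    case: (tot G1 G2 F1 F2) => s.
    + exact: (proj2 (proj2 (FP G2 F2)) _ _ _ (s _ H1) H2).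
    + exact: (proj2 (proj2 (FP G1 F1)) _ _ _ H1 (s _ H2)).
have i0 : inhabited U by constructor.
case: (classic (forall x, X x -> exists z, G (x,z))) => [HX|HX].
  left; exists (fun x => epsilon i0 (fun z => G (x,z))); split.
  - move=> x Xx; exact: (proj2 (HG1 _ _ (epsilon_spec i0 _ (HX x Xx)))).
  - move=> x y Xx Xy e.
    apply: (HG3 x y (epsilon i0 (fun z => G (x,z)))).
    + exact: (epsilon_spec i0 _ (HX x Xx)).
    + rewrite e; exact: (epsilon_spec i0 _ (HX y Xy)).
case: (classic (forall z, Z z -> exists x, G (x,z))) => [HZ|HZ].
  right; exists (fun z => epsilon i0 (fun x => G (x,z))); split.
  - move=> z Zz; exact: (proj1 (HG1 _ _ (epsilon_spec i0 _ (HZ z Zz)))).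
  - move=> x y Xx Xy e.
    apply: (HG2 (epsilon i0 (fun x' => G (x',x)))).
    + exact: (epsilon_spec i0 (fun x' => G (x',x)) (HZ x Xx)).
    + rewrite e; exact: (epsilon_spec i0 (fun x' => G (x',y)) (HZ y Xy)).
exfalso.
have [x0 [Xx0 nx0]] : exists x0, X x0 /\ ~ exists z, G (x0,z).
  apply: NNPP => nn; apply: HX => x Xx; apply: NNPP => n2; apply: nn; exists x; by split.
have [z0 [Zz0 nz0]] : exists z0, Z z0 /\ ~ exists x, G (x,z0).
  apply: NNPP => nn; apply: HZ => z Zz; apply: NNPP => n2; apply: nn; exists z; by split.
apply: (Gmax (fun t => G t \/ t = (x0,z0))).
- by move=> t Gt; left.
- exists (x0,z0); split; first by right.
  move=> Gt; apply: nx0; by exists z0.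
split; [|split].
- move=> x z [Gt|[-> ->]]; [exact: HG1|by split].
- move=> x z z' [Gt|[e1 e2]] [Gt'|[e1' e2']]; subst.
  + exact: HG2 Gt Gt'.
  + exfalso; apply: nx0; by exists z.
  + exfalso; apply: nx0; by exists z'.
  + by [].
- move=> x x' z [Gt|[e1 e2]] [Gt'|[e1' e2']]; subst.
  + exact: HG3 Gt Gt'.
  + exfalso; apply: nz0; by exists x.
  + exfalso; apply: nz0; by exists x'.
  + by [].
Qed.



Open Scope nat_scope.
Section Sq.
Variables (U : Type) (u0 : U) (A : U -> Prop) (io : nat -> U).
Hypothesis Aio : forall k, A (io k).
Hypothesis ioinj : forall i j, io i = io j -> i = j.

Let T := (U + ((U*U)*U))%type.
Let Xof (G : T -> Prop) x := G (inl x).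
Let Gr (G : T -> Prop) x y z := G (inr ((x,y),z)).
Let P (G : T -> Prop) :=
  (forall x, Xof G x -> A x) /\
  (forall x y z, Gr G x y z -> Xof G x /\ Xof G y /\ Xof G z) /\
  (forall x y, Xof G x -> Xof G y -> exists z, Gr G x y z) /\
  (forall x y z z', Gr G x y z -> Gr G x y z' -> z = z') /\
  (forall x y x' y' z, Gr G x y z -> Gr G x' y' z -> x = x' /\ y = y').

Let G0 (t : T) : Prop := match t with
  | inl x => exists k, x = io k
  | inr ((x,y),z) => exists i j, x = io i /\ y = io j /\ z = io (to_nat (i,j)) end.

Let PG0 : P G0.
Proof.
split; [|split; [|split; [|split]]].
- by move=> x [k ->].
- move=> x y z [i [j [-> [-> ->]]]]; split; [|split]; eexists; reflexivity.
- move=> x y [i ->] [j ->]; exists (io (to_nat (i,j))); exists i, j; by [].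
- by move=> x y z z' [i [j [-> [-> ->]]]] [i' [j' [e1 [e2 ->]]]];
    rewrite (ioinj _ _ e1) (ioinj _ _ e2).
- move=> x y x' y' z [i [j [-> [-> ->]]]] [i' [j' [-> [-> e]]]].
  have := f_equal of_nat (ioinj _ _ e); rewrite !cancel_of_to; case=> -> ->; by [].
Qed.

Let P' H := P (fun t => G0 t \/ H t).

Let chain_ok : forall F : (T -> Prop) -> Prop, (forall G, F G -> P' G) ->
     (forall G1 G2, F G1 -> F G2 -> (forall t, G1 t -> G2 t) \/ (forall t, G2 t -> G1 t)) ->
     P' (fun t => exists G, F G /\ G t).
Proof.
move=> F FP tot.
set Uf := fun t => G0 t \/ (fun t => exists G, F G /\ G t) t.
have loc2 : forall a b, Uf a -> Uf b -> exists K, P K /\ K a /\ K b /\ (forall t, K t -> Uf t).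
  move=> a b [Ga|[H1 [F1 H1a]]] [Gb|[H2 [F2 H2b]]].
  - exists G0; split; first exact PG0; split; first by []; split; first by [].
    by move=> t; left.
  - exists (fun t => G0 t \/ H2 t); split; first exact: FP.
    split; [by left|split;[by right|]]. move=> t [?|?]; [by left|right; by exists H2].
  - exists (fun t => G0 t \/ H1 t); split; first exact: FP.
    split; [by right|split;[by left|]]. move=> t [?|?]; [by left|right; by exists H1].
  - case: (tot H1 H2 F1 F2) => s.
    + exists (fun t => G0 t \/ H2 t); split; first exact: FP.
      split; [right; exact: s|split;[by right|]]. move=> t [?|?]; [by left|right; by exists H2].
    + exists (fun t => G0 t \/ H1 t); split; first exact: FP.
      split; [by right|split;[right; exact: s|]]. move=> t [?|?]; [by left|right; by exists H1].
rewrite /P'; fold Uf.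
split; [|split; [|split; [|split]]].
- move=> x Hx; have [K [[PK _] [Ka [_ _]]]] := loc2 _ _ Hx Hx; exact: PK.
- move=> x y z Hx; have [K [[_ [PK _]] [Ka [_ KU]]]] := loc2 _ _ Hx Hx.
  have [? [? ?]] := PK _ _ _ Ka; split; [|split]; apply: KU; by [].
- move=> x y Hx Hy; have [K [[_ [_ [PK _]]] [Ka [Kb KU]]]] := loc2 _ _ Hx Hy.
  have [z Hz] := PK _ _ Ka Kb; exists z; exact: KU.
- move=> x y z z' Hx Hy; have [K [[_ [_ [_ [PK _]]]] [Ka [Kb KU]]]] := loc2 _ _ Hx Hy.
  exact: PK Ka Kb.
- move=> x y x' y' z Hx Hy; have [K [[_ [_ [_ [_ PK]]]] [Ka [Kb KU]]]] := loc2 _ _ Hx Hy.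
  exact: PK Ka Kb.
Qed.

Lemma sq_inj : exists p : U -> U -> U, (forall x y, A x -> A y -> A (p x y)) /\
  (forall x y x' y', A x -> A y -> A x' -> A y' -> p x y = p x' y' -> x = x' /\ y = y').
Proof.
have [H [PH Hmax]] := @ZornM.my_zorn T P' chain_ok.
set G := fun t => G0 t \/ H t.
have [GA [Grange [Gtot [Gfun Ginj]]]] : P G := PH.
have i0 : inhabited U by constructor.
set X := Xof G.
set f := fun x y => epsilon i0 (Gr G x y).
have fspec : forall x y, X x -> X y -> Gr G x y (f x y).
  move=> x y Xx Xy; apply: epsilon_spec; exact: Gtot.
have fX : forall x y, X x -> X y -> X (f x y).
  move=> x y Xx Xy; exact: (proj2 (proj2 (Grange _ _ _ (fspec _ _ Xx Xy)))).
have finj : forall x y x' y', X x -> X y -> X x' -> X y' -> f x y = f x' y' -> x = x' /\ y = y'.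
  move=> x y x' y' Xx Xy Xx' Xy' e.
  apply: (Ginj _ _ _ _ (f x y) (fspec _ _ Xx Xy)); rewrite e; exact: fspec.
have Xio : forall k, X (io k) by move=> k; left; exists k.
have XA : forall x, X x -> A x := GA.
case: (compar u0 X (fun u => A u /\ ~ X u)) => [[h [hX hinj]]|[h [hX hinj]]]; last first.
  pose k := fun x => match excluded_middle_informative (X x) with
     | left _ => f (io 0) x | right _ => f (io 1) (h x) end.
  have kX : forall x, A x -> X (k x).
    move=> x Ax; rewrite /k; case: excluded_middle_informative => Xx.
    - exact: fX.
    - apply: (fX) => //; apply: (hX); by split.
  have kinj : forall x y, A x -> A y -> k x = k y -> x = y.
    move=> x y Ax Ay; rewrite /k.
    case: excluded_middle_informative => Xx; case: excluded_middle_informative => Xy e.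
    - exact: (proj2 (finj _ _ _ _ (Xio _) Xx (Xio _) Xy e)).
    - have := proj1 (finj _ _ _ _ (Xio _) Xx (Xio _) (hX y (conj Ay Xy)) e).
      by move=> /ioinj.
    - have := proj1 (finj _ _ _ _ (Xio _) (hX x (conj Ax Xx)) (Xio _) Xy e).
      by move=> /ioinj.
    - apply: hinj; [by split|by split|].
      exact: (proj2 (finj _ _ _ _ (Xio _) (hX x (conj Ax Xx)) (Xio _) (hX y (conj Ay Xy)) e)).
  exists (fun x y => f (k x) (k y)); split.
  - move=> x y Ax Ay; apply: XA; apply: (fX); exact: kX.
  - move=> x y x' y' Ax Ay Ax' Ay' e.
    have [e1 e2] := finj _ _ _ _ (kX _ Ax) (kX _ Ay) (kX _ Ax') (kX _ Ay') e.
    split; exact: kinj.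
(* X injects into A \ X : contradiction with maximality *)
exfalso.
set Y := fun y => exists x, X x /\ y = h x.
set hinv := fun y => epsilon i0 (fun x => X x /\ h x = y).
have Yspec : forall y, Y y -> X (hinv y) /\ h (hinv y) = y.
  move=> y [x [Xx ->]]; apply: (epsilon_spec i0 (fun x0 => X x0 /\ h x0 = h x)).
  by exists x.
have YnX : forall y, Y y -> ~ X y.
  move=> y [x [Xx ->]]; exact: (proj2 (hX x Xx)).
set D := fun u => X u \/ Y u.
pose tag := fun u v => ((match excluded_middle_informative (X u) with left _ => 0 | right _ => 1 end) +
   (match excluded_middle_informative (X v) with left _ => 0 | right _ => 2 end))%nat.
pose c := fun u => match excluded_middle_informative (X u) with left _ => u | right _ => hinv u end.
have cX : forall u, D u -> X (c u).
  move=> u Du; rewrite /c; case: excluded_middle_informative => Xu //.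
  case: Du => // Yu; exact: (proj1 (Yspec _ Yu)).
pose Fn := fun u v => h (f (io (tag u v)) (f (c u) (c v))).
have FnY : forall u v, D u -> D v -> Y (Fn u v).
  move=> u v Du Dv; exists (f (io (tag u v)) (f (c u) (c v))); split => //.
  apply: (fX) => //; apply: (fX); exact: cX.
have Fninj : forall u v u' v', D u -> D v -> D u' -> D v' -> Fn u v = Fn u' v' -> u = u' /\ v = v'.
  move=> u v u' v' Du Dv Du' Dv' e.
  have Xa : forall a b, D a -> D b -> X (f (io (tag a b)) (f (c a) (c b))).
    move=> a b Da Db; apply: (fX) => //; apply: (fX); exact: cX.
  have e1 := hinj _ _ (Xa _ _ Du Dv) (Xa _ _ Du' Dv') e.
  have [e2 e3] := finj _ _ _ _ (Xio _) (fX _ _ (cX _ Du) (cX _ Dv)) (Xio _) (fX _ _ (cX _ Du') (cX _ Dv')) e1.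
  have etag := ioinj _ _ e2.
  have [ec1 ec2] := finj _ _ _ _ (cX _ Du) (cX _ Dv) (cX _ Du') (cX _ Dv') e3.
  have cinj : forall a b, D a -> D b -> (X a <-> X b) -> c a = c b -> a = b.
    move=> a b Da Db hab; rewrite /c.
    case: excluded_middle_informative => Xa'; case: excluded_middle_informative => Xb' //.
    - by case: (Xb' (proj1 hab Xa')).
    - by case: (Xa' (proj2 hab Xb')).
    - move=> ehinv.
      have Ya : Y a by case: Da.
      have Yb : Y b by case: Db.
      by rewrite -(proj2 (Yspec _ Ya)) -(proj2 (Yspec _ Yb)) ehinv.
  move: etag; rewrite /tag.
  case: excluded_middle_informative => Xu; case: excluded_middle_informative => Xv;
  case: excluded_middle_informative => Xu'; case: excluded_middle_informative => Xv' //= _;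
  split; apply: cinj => //; split; move=> _; by [].
pose N := fun t : T => match t with
  | inl y => Y y
  | inr ((u,v),z) => D u /\ D v /\ ~ (X u /\ X v) /\ z = Fn u v end.
pose G' := fun t => G t \/ N t.
have io0 : X (io 0) := Xio 0.
apply: (Hmax G').
- by move=> t Ht; left; right.
- exists (inl (h (io 0))); split; first by right; exists (io 0).
  move=> Ht; apply: (YnX (h (io 0))); first by exists (io 0).
  by right.
have eG : (fun t => G0 t \/ G' t) = G'.
  apply: functional_extensionality => t; apply: propositional_extensionality.
  split; last by right.
  case=> [?|//]; left; by left.
rewrite /P' eG.
have XoG' : forall x, Xof G' x <-> D x by [].
split; [|split; [|split; [|split]]].
- move=> x [Gx|[x' [Xx' ->]]]; first exact: GA.
  exact: (proj1 (hX _ Xx')).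
- move=> x y z [Gt|[Dx [Dy [nXX ->]]]].
  + have [? [? ?]] := Grange _ _ _ Gt; split; [|split]; by left.
  + split; [by []|split; [by []|]]. right; exact: FnY.
- move=> x y Dx Dy.
  case: (classic (X x /\ X y)) => [[Xx Xy]|nXX].
  + have [z Hz] := Gtot _ _ Xx Xy; exists z; by left.
  + exists (Fn x y); right; by [].
- move=> x y z z' [Gt|[Dx [Dy [nXX ->]]]] [Gt'|[Dx' [Dy' [nXX' ->]]]].
  + exact: Gfun Gt Gt'.
  + exfalso; apply: nXX'; have [? [? ?]] := Grange _ _ _ Gt; by split.
  + exfalso; apply: nXX; have [? [? ?]] := Grange _ _ _ Gt'; by split.
  + by [].
- move=> x y x' y' z [Gt|[Dx [Dy [nXX e]]]] [Gt'|[Dx' [Dy' [nXX' e']]]].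
  + exact: Ginj Gt Gt'.
  + exfalso; apply: (YnX z); [rewrite e'; exact: FnY|].
    exact: (proj2 (proj2 (Grange _ _ _ Gt))).
  + exfalso; apply: (YnX z); [rewrite e; exact: FnY|].
    exact: (proj2 (proj2 (Grange _ _ _ Gt'))).
  + apply: Fninj => //; by rewrite -e -e'.
Qed.
End Sq.
Open Scope R_scope.



Lemma inf_or_count {U : Type} (u0 : U) (A : U -> Prop) :
  (exists e : nat -> U, forall x, A x -> exists k, e k = x) \/
  (exists io : nat -> U, (forall k, A (io k)) /\ (forall i j, io i = io j -> i = j)).
Proof.
have i0 : inhabited U by constructor.
case: (classic (forall l : list U, exists x, A x /\ ~ List.In x l)) => [Hl|Hl]; last first.
  left.
  have [l Hl'] : exists l : list U, forall x, A x -> List.In x l.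
    apply: NNPP => nn; apply: Hl => l; apply: NNPP => n2; apply: nn; exists l => x Ax.
    apply: NNPP => n3; apply: n2; exists x; by split.
  exists (fun k => List.nth k l u0) => x Ax.
  have [k [_ hk]] := List.In_nth l x u0 (Hl' x Ax); by exists k.
right.
pose pick := fun l : list U => epsilon i0 (fun x => A x /\ ~ List.In x l).
have pickS : forall l, A (pick l) /\ ~ List.In (pick l) l.
  move=> l; exact: (epsilon_spec i0 (fun x => A x /\ ~ List.In x l) (Hl l)).
pose g := fix g (k : nat) : list U := match k with
  | O => nil | S k => (g k ++ (pick (g k) :: nil))%list end.
exists (fun k => pick (g k)); split; first by move=> k; case: (pickS (g k)).
have Hin : forall j k : nat, (j < k)%nat -> List.In (pick (g j)) (g k).
  move=> j; elim=> [|k IH] //= hjk.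
  apply: List.in_or_app.
  case: (ltngtP j k) hjk => [hlt _|hgt|->].
  - left; exact: IH.
  - by rewrite ltnS leqNgt hgt.
  - by right; left.
move=> i j e.
case: (ltngtP i j) => [hlt|hgt|//].
- have := Hin _ _ hlt; rewrite e => h; by case: (proj2 (pickS (g j))).
- have := Hin _ _ hgt; rewrite -e => h; by case: (proj2 (pickS (g i))).
Qed.

Lemma box_vol_deg n (hn : (1 <= n)%nat) (a : Vec n) : box_vol a a = 0.
Proof.
rewrite /box_vol.
have : (0 < size (enum 'I_n))%nat by rewrite size_enum_ord.
case: (enum 'I_n) => [|i s] //= _.
by rewrite Rminus_diag Rmult_0_l.
Qed.

Lemma count_null n (hn : (1 <= n)%nat) (A : vset n) (e : nat -> Vec n) :
  (forall x, A x -> exists k, e k = x) -> null_set A.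
Proof.
move=> He eps heps; exists e, e; split; [|split].
- move=> k i; exact: Rle_refl.
- move=> x Ax; have [k hk] := He x Ax; exists k; rewrite -hk => i; split; exact: Rle_refl.
- move=> N.
  have -> : sum_f_R0 (fun k => box_vol (e k) (e k)) N = 0.
    elim: N => [|N IH] /=; first exact: box_vol_deg.
    by rewrite IH box_vol_deg // Rplus_0_l.
  lra.
Qed.

Lemma small_zero (a : R) : (forall r, 0 < r -> Rabs a < r) -> a = 0.
Proof.
move=> H; apply: NNPP => na.
have := H (Rabs a) (Rabs_pos_lt _ na); lra.
Qed.

Lemma single_nd n (hn : (1 <= n)%nat) (p : Vec n) : nowhere_dense (fun y => y = p).
Proof.
move=> x [r [hr Hr]].
have cl : forall z, closure (fun y => y = p) z -> forall i, z i = p i.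
  move=> z Hz i.
  have : p i - z i = 0.
    apply: small_zero => r' hr'; have [y [-> hb]] := Hz r' hr'; exact: hb.
  lra.
pose i0 := Ordinal hn.
pose y' := fun i : 'I_n => if i == i0 then x i + r / 2 else x i.
have h1 := cl x (Hr x (fun i => ltac:(rewrite Rminus_diag Rabs_R0; exact hr))) i0.
have hb : ball x r y'.
  move=> i; rewrite /y'; case: (eq_op i i0).
  - have -> : x i + r / 2 - x i = r / 2 by ring.
    rewrite Rabs_right; lra.
  - rewrite Rminus_diag Rabs_R0; exact hr.
have h2 := cl y' (Hr y' hb) i0.
move: h2; rewrite /y' eqxx; lra.
Qed.

Lemma count_meager n (hn : (1 <= n)%nat) (A : vset n) (e : nat -> Vec n) :
  (forall x, A x -> exists k, e k = x) -> meager A.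
Proof.
move=> He; exists (fun k => fun y => y = e k); split.
- move=> k; exact: single_nd.
- move=> x Ax; have [k hk] := He x Ax; by exists k.
Qed.



Fixpoint lincomb {n} (l : list (Q * Vec n)) : Vec n :=
  match l with
  | nil => vzero n
  | (q, a) :: l => vadd (vscale (Q2R q) a) (lincomb l)
  end.

Definition allA {n} (A : vset n) (l : list (Q * Vec n)) :=
  forall qa, List.In qa l -> A (snd qa).

Definition span {n} (A : vset n) : vset n :=
  fun x => exists l, allA A l /\ x = lincomb l.

Lemma lincomb_app {n} (l1 l2 : list (Q * Vec n)) :
  lincomb (l1 ++ l2) = vadd (lincomb l1) (lincomb l2).
Proof.
elim: l1 => [|[q a] l IH] /=.
- apply: functional_extensionality => i; rewrite /vadd /vzero; ring.
- rewrite IH; apply: functional_extensionality => i; rewrite /vadd /vscale; ring.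
Qed.

Lemma lincomb_map {n} (q : Q) (l : list (Q * Vec n)) :
  lincomb (List.map (fun qa => ((q * fst qa)%Q, snd qa)) l) = vscale (Q2R q) (lincomb l).
Proof.
elim: l => [|[r a] l IH] /=.
- apply: functional_extensionality => i; rewrite /vscale /vzero; ring.
- rewrite IH Q2R_mult; apply: functional_extensionality => i; rewrite /vadd /vscale; ring.
Qed.

Lemma span_sub {n} (A : vset n) x : A x -> span A x.
Proof.
move=> Ax; exists ((1%Q, x) :: nil); split.
- by move=> qa [<-|[]].
- apply: functional_extensionality => i; rewrite /= /vadd /vscale /vzero /Q2R /=.
  field.
Qed.

Lemma span_Q {n} (A : vset n) : Q_subspace (span A).
Proof.
split; [|split].
- exists nil; split; [by move=> ? []|by []].
- move=> x y [l1 [H1 ->]] [l2 [H2 ->]]; exists (l1 ++ l2)%list; split.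
  + move=> qa h; case: (List.in_app_or _ _ _ h) => h'; [exact: H1|exact: H2].
  + by rewrite lincomb_app.
- move=> q x [l [Hl ->]]; exists (List.map (fun qa => ((q * fst qa)%Q, snd qa)) l); split.
  + move=> qa h; have [[r a] [<- hin]] := proj1 (List.in_map_iff _ _ _) h; exact: (Hl _ hin).
  + by rewrite lincomb_map.
Qed.

Definition encQ (q : Q) : nat :=
  to_nat (to_nat (Z.to_nat (Qnum q), Z.to_nat (- Qnum q)), Pos.to_nat (Qden q)).

Lemma to_nat_inj x y : to_nat x = to_nat y -> x = y.
Proof. move=> e; rewrite -(cancel_of_to x) -(cancel_of_to y) e; by []. Qed.

Lemma encQ_inj q q' : encQ q = encQ q' -> q = q'.
Proof.
rewrite /encQ => e.
have h := to_nat_inj _ _ e.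
have e1 := f_equal fst h; have e2 := f_equal snd h.
have h' := to_nat_inj _ _ e1.
have e3 := f_equal fst h'; have e4 := f_equal snd h'.
move: e2 e3 e4; clear; case: q q' => [a b] [a' b'] /= e2 e3 e4.
have -> : b = b' by apply: Pos2Nat.inj.
have -> : a = a' by lia.
by [].
Qed.

Section Enc.
Variables (n : nat) (A : vset n) (io : nat -> Vec n) (p : Vec n -> Vec n -> Vec n).
Hypothesis Aio : forall k, A (io k).
Hypothesis ioinj : forall i j, io i = io j -> i = j.
Hypothesis pA : forall x y, A x -> A y -> A (p x y).
Hypothesis pinj : forall x y x' y', A x -> A y -> A x' -> A y' -> p x y = p x' y' -> x = x' /\ y = y'.

Fixpoint enc (l : list (Q * Vec n)) : Vec n :=
  match l with
  | nil => io 0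
  | (q, a) :: l => p (p (io (encQ q)) a) (enc l)
  end.

Lemma enc_A l : allA A l -> A (enc l).
Proof.
elim: l => [|[q a] l IH] //= H.
apply: pA.
- apply: pA => //; exact: (H (q,a) (or_introl (Logic.eq_refl _))).
- apply: IH => qa h; apply: H; by right.
Qed.

Lemma enc_inj l1 : forall l2, allA A l1 -> allA A l2 -> length l1 = length l2 -> enc l1 = enc l2 -> l1 = l2.
Proof.
elim: l1 => [|[q a] l IH] [|[q' a'] l'] //= H1 H2 el e.
have H1' : allA A l by move=> qa h; apply: H1; right.
have H2' : allA A l' by move=> qa h; apply: H2; right.
have Aa : A a := H1 (q,a) (or_introl (Logic.eq_refl _)).
have Aa' : A a' := H2 (q',a') (or_introl (Logic.eq_refl _)).
have [e1 e2] := pinj _ _ _ _ (pA _ _ (Aio _) Aa) (enc_A _ H1') (pA _ _ (Aio _) Aa') (enc_A _ H2') e.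
have [e3 e4] := pinj _ _ _ _ (Aio _) Aa (Aio _) Aa' e1.
rewrite (encQ_inj _ _ (ioinj _ _ e3)) e4 (IH l' H1' H2' _ e2) //.
by case: el.
Qed.

Lemma span_le : card_le (span A) A.
Proof.
have i0 : inhabited (list (Q * Vec n)) by constructor; exact nil.
pose L := fun x => epsilon i0 (fun l => allA A l /\ x = lincomb l).
have Lspec : forall x, span A x -> allA A (L x) /\ x = lincomb (L x).
  move=> x hx; exact: (epsilon_spec i0 (fun l => allA A l /\ x = lincomb l) hx).
exists (fun x => p (io (length (L x))) (enc (L x))); split.
- move=> x hx; apply: pA => //; apply: enc_A; exact: (proj1 (Lspec x hx)).
- move=> x y hx hy e.
  have [ax ex] := Lspec x hx; have [ay ey] := Lspec y hy.
  have [e1 e2] := pinj _ _ _ _ (Aio _) (enc_A _ ax) (Aio _) (enc_A _ ay) e.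
  by rewrite ex ey (enc_inj _ _ ax ay (ioinj _ _ e1) e2).
Qed.
End Enc.



Theorem theorem2p3 (n : nat) (hn : (1 <= n)%nat) :
  (non_lt (@meager n) (@null_set n) ->
     exists V : vset n, Q_subspace V /\ null_set V /\ ~ meager V) /\
  (non_lt (@null_set n) (@meager n) ->
     exists V : vset n, Q_subspace V /\ meager V /\ ~ null_set V).
Proof.
split.
- move=> [A [nmA HA]].
  case: (inf_or_count (vzero n) A) => [[e He]|[io [Aio ioinj]]].
    by case: nmA; exact: (count_meager n hn A e He).
  have [p [pA pinj]] := @sq_inj _ (vzero n) A io Aio ioinj.
  exists (span A); split; first exact: span_Q.
  split.
  + apply: NNPP => nn; have [_ nle] := HA (span A) nn; apply: nle.
    exact: (span_le n A io p Aio ioinj pA pinj).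
  + move=> [F [Fnd Fcov]]; apply: nmA; exists F; split => // x Ax.
    apply: Fcov; exact: span_sub.
- move=> [A [nnA HA]].
  case: (inf_or_count (vzero n) A) => [[e He]|[io [Aio ioinj]]].
    by case: nnA; exact: (count_null n hn A e He).
  have [p [pA pinj]] := @sq_inj _ (vzero n) A io Aio ioinj.
  exists (span A); split; first exact: span_Q.
  split.
  + apply: NNPP => nn; have [_ nle] := HA (span A) nn; apply: nle.
    exact: (span_le n A io p Aio ioinj pA pinj).
  + move=> nsp; apply: nnA => eps heps.
    have [a [b [hab [hcov hsum]]]] := nsp eps heps.
    exists a, b; split => //; split => // x Ax; apply: hcov; exact: span_sub.
Qed.
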